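(* Assume the setting of the context (in particular $u=0$ and $p>k$, so $0<\vartheta<\pi$). Let $X_e=\{(\alpha,r)\in\mathbb R\times\mathbb R_+ : r\cos\alpha\le 1 \text{ or } |\alpha|\ge\pi/2\}$ and, with $\tau(\alpha,r)=(\alpha-\vartheta,r)$, let $X_u=\bigcap_{m\in\mathbb Z}\tau^m(X_e)$. Then $Q_u=(\mathbb C\times X_u)\cap\tilde L$, and every point $(z,\alpha,r)\in Q_u$ satisfies $$r\le \frac{1}{\cos\frac{\vartheta}{2}}.$$
   Context: Let $\tilde L=\{(z,\alpha,r)\in\mathbb C\times\mathbb R\times\mathbb R_{>0} : |z|<r\}$, $L=\{(z,w)\in\mathbb C^2: |z|<|w|\}$, and $\pi:\tilde L\to L$, $\pi(z,\alpha,r)=(z,re^{i\alpha})$ (a universal covering). Equip $\mathbb C^2$ with the real symmetric bilinear form $\langle (z_1,w_1),(z_2,w_2)\rangle=\mathrm{Re}(z_1\bar z_2-w_1\bar w_2)$. Let $G=\{(z,w):|z|^2-|w|^2=-1\}\subset L$, identified with $\mathrm{SU}(1,1)$ via $\begin{pmatrix} w&z\\ \bar z&\bar w\end{pmatrix}\mapsto (z,\bar w)$; then left multiplication by $g\leftrightarrow(z_g,\bar w_g)$ extends to the $\mathbb R$-linear isometry $(z,v)\mapsto (w_g z+z_g v,\ \bar z_g z+\bar w_g v)$ of $\mathbb C^2$ preserving $L$. Let $\tilde G=\{(z,\alpha,r)\in\tilde L: |z|^2=r^2-1\}=\pi^{-1}(G)$, the universal cover $\widetilde{\mathrm{SU}}(1,1)$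 with identity $e=(0,0,1)$; the left action of $G$ on $L$ lifts to a left action of $\tilde G$ on $\tilde L$ extending left multiplication on $\tilde G$. Elements of $\tilde G$ act on the unit disk $\mathbb D$ through $\mathrm{PSU}(1,1)$: $(z,\alpha,r)$ with $w=re^{-i\alpha}$ acts by $\zeta\mapsto (w\zeta+z)/(\bar z\zeta+\bar w)$. For $g\in\tilde G$ with $\bar g=\pi(g)$, let $\bar I_{\bar g}=\{a\in L:\langle \bar g,a\rangle\le -1\}$, $\bar E_{\bar g}=\{a\in L:\langle\bar g,a\rangle=-1\}$; let $I_g$, $E_g$ be the connected components of $\pi^{-1}(\bar I_{\bar g})$, $\pi^{-1}(\bar E_{\bar g})$ containing $g$; $E_g$ separates $\tilde L$ into two components, the closure of one being $I_g$; let $H_g$ be the closure of the other (so $\partial H_g=\partial I_g=E_g$). Let $\Gamma\subset\tilde G$ be a discrete subgroup of finite level $k$ (the index of $\Gamma\cap Z$ in the infinite cyclic centre $Z$ of $\tilde G$), let $\bar\Gamma$ be its image in $\mathrm{PSU}(1,1)$, and let $u\in\mathbb D$ be a point fixed by a nontrivial element of $\bar\Gamma$, with isotropy group $\bar\Gamma_u$ of order $p$. Assume $p>k$ and (after conjugation) $u=0$. Put $\vartheta=\pi k/p$; the isotropy group $\Gamma_u$ is infinite cyclic generated by $r_d=(0,-\vartheta,1)$, which acts by $(z,\alpha,r)\mapsto(ze^{i\vartheta},\alpha-\vartheta,r)$. For $x$ in the orbit $\Gamma(u)$ let $T(x)=\{g\in\Gamma: g(u)=x\}$ and $Q_x=\bigcap_{g\in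 T(x)}H_g$; in particular $T(u)=\Gamma_u$ and $Q_u=\bigcap_{m\in\mathbb Z}H_{r_d^m}$. *)

(* Defs.v *)
From HB Require Import structures.
From mathcomp Require Import all_boot all_order all_algebra.
From mathcomp Require Import all_classical all_reals all_analysis.
Set Implicit Arguments. Unset Strict Implicit. Unset Printing Implicit Defensive.
Import Order.TTheory GRing.Theory Num.Theory.
Import numFieldNormedType.Exports.
Local Open Scope classical_set_scope.
Local Open Scope ring_scope.

(* MathComp-Analysis, R : realType.
   A point (z, alpha, r) of C x R x R is encoded as ((x, y), alpha, r)
   with z = x + i y.  A point of C^2 is encoded as ((zx,zy),(wx,wy)). *)
Notation pt R := (R * R * R * R)%type.

Section Defs.
Variable R : realType.

Definition pz (a : pt R) : R * R := a.1.1.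
Definition palpha (a : pt R) : R := a.1.2.
Definition pr (a : pt R) : R := a.2.

Definition Ltil : set (pt R) :=
  [set a | 0 < pr a /\ (pz a).1 ^+ 2 + (pz a).2 ^+ 2 < pr a ^+ 2].

Definition piL (a : pt R) : (R * R) * (R * R) :=
  (pz a, (pr a * cos (palpha a), pr a * sin (palpha a))).

(* <(z1,w1),(z2,w2)> = Re(z1 conj z2 - w1 conj w2) *)
Definition form (a b : (R * R) * (R * R)) : R :=
  (a.1.1 * b.1.1 + a.1.2 * b.1.2) - (a.2.1 * b.2.1 + a.2.2 * b.2.2).

Definition preIbar (g : pt R) : set (pt R) :=
  [set a | Ltil a /\ form (piL g) (piL a) <= -1].
Definition preEbar (g : pt R) : set (pt R) :=
  [set a | Ltil a /\ form (piL g) (piL a) = -1].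

Definition Ig (g : pt R) : set (pt R) := connected_component (preIbar g) g.
Definition Eg (g : pt R) : set (pt R) := connected_component (preEbar g) g.

(* H_g : closure (in \tilde L) of the component of \tilde L \ E_g other than
   the interior side I_g \ E_g, i.e. of \tilde L \ I_g (since E_g <= I_g). *)
Definition Hg (g : pt R) : set (pt R) := closure (Ltil `\` Ig g) `&` Ltil.

Definition rd_pow (th : R) (m : int) : pt R := ((0, 0), - (m%:~R * th), 1).

Definition Qu (th : R) : set (pt R) := [set a | forall m : int, Hg (rd_pow th m) a].

Definition Xe : set (R * R) :=
  [set ar | 0 < ar.2 /\ (ar.2 * cos ar.1 <= 1 \/ pi / 2 <= `|ar.1|)].
Definition tau_pow (th : R) (m : int) (ar : R * R) : R * R :=
  (ar.1 - m%:~R * th, ar.2).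
Definition Xu (th : R) : set (R * R) :=
  [set ar | forall m : int, (tau_pow th m @` Xe) ar].

End Defs.

(* Main.v *)
Require Import Defs.
From HB Require Import structures.
From mathcomp Require Import all_boot all_order all_algebra.
From mathcomp Require Import all_classical all_reals all_analysis.
From mathcomp Require Import ring lra.
Import Order.TTheory GRing.Theory Num.Theory.
Import numFieldNormedType.Exports.
Local Open Scope classical_set_scope.
Local Open Scope ring_scope.

Section Helpers.
Variable R : realType.

Lemma cont_alpha : continuous (fun a : pt R => a.1.2).
Proof. move=> x. apply: cvg_comp; [exact: cvg_fst|exact: cvg_snd]. Qed.

Lemma cont_r : continuous (fun a : pt R => a.2).
Proof. move=> x. exact: cvg_snd. Qed.

Lemma cont_beta (c : R) : continuous (fun a : pt R => palpha a + c).
Proof. move=> x. apply: cvgD; [exact: cont_alpha| exact: cvg_cst]. Qed.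

Lemma cont_rcos (c : R) : continuous (fun a : pt R => pr a * cos (palpha a + c)).
Proof. move=> x.
apply: cvgM; first exact: cont_r.
apply: (@cvg_comp _ _ _ (fun a : pt R => a.1.2 + c) cos _ (nbhs (x.1.2 + c)));
  last exact: continuous_cos.
exact: cont_beta.
Qed.

Lemma path1_cont (c r : R) :
  continuous (fun t : R => ((((0:R),(0:R)), c, 1 + t*(r-1))) : pt R).
Proof. move=> t.
apply: (cvg_pair (G := nbhs ((0:R,0:R),c)) (H := nbhs (1 + t*(r-1)))).
  exact: cvg_cst.
apply: cvgD; first exact: cvg_cst. apply: cvgM; [exact: cvg_id| exact: cvg_cst].
Qed.

Lemma path2_cont (x y c b r : R) :
  continuous (fun t : R => (((t * x, t * y), c + t * b, r)) : pt R).
Proof. move=> t.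
apply: (cvg_pair (G := nbhs ((t*x, t*y),c + t * b)) (H := nbhs r)); last exact: cvg_cst.
apply: (cvg_pair (G := nbhs (t*x, t*y)) (H := nbhs (c + t * b)));
  last by apply: cvgD; [exact: cvg_cst|apply: cvgM; [exact: cvg_id| exact: cvg_cst]].
apply: (cvg_pair (G := nbhs (t*x)) (H := nbhs (t * y)));
  apply: cvgM; [exact: cvg_id| exact: cvg_cst|exact: cvg_id| exact: cvg_cst].
Qed.

Lemma path3_cont (z : R * R) (al sg r : R) :
  continuous (fun s : R => ((z, al + sg * s, r)) : pt R).
Proof. move=> t.
apply: (cvg_pair (G := nbhs (z, al + sg * t)) (H := nbhs r)); last exact: cvg_cst.
apply: (cvg_pair (G := nbhs z) (H := nbhs (al + sg * t))); first exact: cvg_cst.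
by apply: cvgD; [exact: cvg_cst|apply: cvgM; [exact: cvg_cst| exact: cvg_id]].
Qed.

Lemma cos_le_abs (x y : R) : `|x| <= `|y| -> `|y| <= pi -> cos y <= cos x.
Proof.
move=> h1 h2.
have hx : `|x| \in `[0, pi] by rewrite in_itv/= normr_ge0 (le_trans h1 h2).
have hy : `|y| \in `[0, pi] by rewrite in_itv/= normr_ge0 h2.
by rewrite -(cos_norm x) -(cos_norm y) leNgt ltr_cos // -leNgt.
Qed.

Lemma cos_lt_abs (x y : R) : `|x| < `|y| -> `|y| <= pi -> cos y < cos x.
Proof.
move=> h1 h2.
have hx : `|x| \in `[0, pi] by rewrite in_itv/= normr_ge0 (le_trans (ltW h1) h2).
have hy : `|y| \in `[0, pi] by rewrite in_itv/= normr_ge0 h2.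
by rewrite -(cos_norm x) -(cos_norm y) ltr_cos.
Qed.

Lemma img_connected (f : R -> pt R) : continuous f -> connected (f @` `[0, 1]).
Proof.
move=> cf; apply: connected_continuous_connected; first exact: segment_connected.
exact: continuous_subspaceT.
Qed.

End Helpers.

Section Main.
Variable R : realType.
Variables (th : R) (m : int).

Lemma form_rd (a : pt R) :
  Defs.form (piL (rd_pow th m)) (piL a) = - (pr a * cos (palpha a + m%:~R * th)).
Proof. rewrite /Defs.form /piL /rd_pow /pz /pr /palpha /= cosD cosN sinN. ring. Qed.

Definition Dm := [set a : pt R | Ltil a /\
  (-(pi/2) < palpha a + m%:~R * th < pi/2) /\
  1 <= pr a * cos (palpha a + m%:~R * th)].

Lemma preI (a : pt R) : preIbar (rd_pow th m) a <->
  Ltil a /\ 1 <= pr a * cos (palpha a + m%:~R * th).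
Proof. by rewrite /preIbar /= form_rd lerN2. Qed.

Lemma Ig_sub : Ig (rd_pow th m) `<=` Dm.
Proof.
move=> b [C [Cg CA Cc] Cb].
set f := fun a : pt R => palpha a + m%:~R * th.
have hI : is_interval (f @` C).
  apply/connected_intervalP; apply: connected_continuous_connected Cc _.
  exact/continuous_subspaceT/cont_beta.
have f0 : (f @` C) 0 by exists (rd_pow th m) => //; rewrite /f /palpha /rd_pow /= addNr.
have fb : (f @` C) (f b) by exists b.
have nz : forall x, (f @` C) x -> cos x != 0.
  move=> x [a Ca <-].
  have h : 1 <= pr a * cos (f a) := ((preI a).1 (CA a Ca)).2.
  apply/eqP => h0; move: h; rewrite h0 mulr0; lra.
have [Lb hb] := (preI b).1 (CA b Cb).
have pi0 := pi_gt0 R.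
split => //; split => //; apply/andP; split.
- rewrite ltNge; apply/negP => hle.
  suff : (f @` C) (-(pi/2)) by move/nz; rewrite cosN cos_pihalf eqxx.
  apply: (hI (f b) 0) => //; rewrite hle /=; lra.
- rewrite ltNge; apply/negP => hle.
  suff : (f @` C) (pi/2) by move/nz; rewrite cos_pihalf eqxx.
  apply: (hI 0 (f b)) => //; rewrite hle andbT; lra.
Qed.

Lemma Ig_sup : Dm `<=` Ig (rd_pow th m).
Proof.
case=> [[[zx zy] al] r] [[r0 hz] [hb hc]].
rewrite /pr /palpha /pz /= in r0 hz hb hc.
set c := m%:~R * th in hb hc *.
set bt := al + c in hb hc *.
have r1 : 1 <= r by have := cos_le1 bt; nra.
have pi0 := pi_gt0 R.
pose f1 := fun t : R => (((0:R),(0:R)), -c, 1 + t*(r-1)) : pt R.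
pose f2 := fun t : R => (((t*zx, t*zy), -c + t*bt, r)) : pt R.
have i0 : `[(0:R), 1]%classic 0 by rewrite /= in_itv /= lexx ler01.
have i1 : `[(0:R), 1]%classic 1 by rewrite /= in_itv /= lexx ler01.
exists (f1 @` `[0,1] `|` f2 @` `[0,1]).
  split.
  - by left; exists 0 => //; rewrite /f1 /rd_pow mul0r addr0.
  - move=> x [[t ht <-]|[t ht <-]]; apply/preI;
      move: ht; rewrite /= in_itv /= => /andP[t0 t1].
    + rewrite /Ltil /pr /pz /palpha /f1 /= -/c addNr cos0 mulr1.
      have h : 0 <= t * (r - 1) by apply: mulr_ge0 => //; lra.
      split; [split|]; try lra.
      rewrite expr0n /= addr0 exprn_gt0 //; lra.
    + rewrite /Ltil /pr /pz /palpha /f2 /= -/c [-c + _]addrC subrK.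
      split; first split => //.
        have -> : (t*zx)^+2 + (t*zy)^+2 = t^+2 * (zx^+2 + zy^+2) by ring.
        have hS : 0 <= zx^+2 + zy^+2 by rewrite addr_ge0 // sqr_ge0.
        have ht2 : 0 <= 1 - t^+2 by rewrite subr_ge0 expr_le1.
        have := mulr_ge0 ht2 hS; lra.
      apply: (le_trans hc); rewrite ler_wpM2l ?(ltW r0) //.
      have hbt : `|bt| < pi/2 by rewrite ltr_norml.
      apply: cos_le_abs; last by have := normr_ge0 bt; lra.
      rewrite normrM (ger0_norm t0).
      have := normr_ge0 bt; nra.
  - apply: connectedU; last 2 first.
    + exact/img_connected/path1_cont.
    + exact/img_connected/path2_cont.
    exists (f1 1); split; first by exists 1.
    by exists 0 => //; rewrite /f1 /f2 !mul0r addr0 mul1r subrKC.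
right; exists 1 => //.
by rewrite /f2 !mul1r /bt addrC addrK.
Qed.

Lemma Ig_eq : Ig (rd_pow th m) = Dm.
Proof. by apply/seteqP; split; [exact: Ig_sub|exact: Ig_sup]. Qed.

Definition HS := [set a : pt R | Ltil a /\
  (pr a * cos (palpha a + m%:~R * th) <= 1 \/ pi/2 <= `|palpha a + m%:~R * th|)].

Lemma nbhs_gt (f : pt R -> R) (x : pt R) (y : R) :
  continuous f -> y < f x -> nbhs x [set b | y < f b].
Proof.
move=> cf h; apply: (cf x [set z | y < z]); apply: open_nbhs_nbhs; split => //; exact: open_gt.
Qed.

Lemma nbhs_lt (f : pt R -> R) (x : pt R) (y : R) :
  continuous f -> f x < y -> nbhs x [set b | f b < y].
Proof.
move=> cf h; apply: (cf x [set z | z < y]); apply: open_nbhs_nbhs; split => //; exact: open_lt.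
Qed.

Lemma Hg_eq : Hg (rd_pow th m) = HS.
Proof.
have pi0 := pi_gt0 R.
rewrite /Hg Ig_eq; apply/seteqP; split.
- move=> a [cla La]; split => //.
  case: (leP (pr a * cos (palpha a + m%:~R * th)) 1) => h; [by left|right].
  rewrite leNgt; apply/negP; rewrite ltr_norml => /andP[h2 h3].
  have N1 := @nbhs_gt _ _ _ (@cont_rcos R (m%:~R * th)) h.
  have N2 := @nbhs_gt _ _ _ (@cont_beta R (m%:~R * th)) h2.
  have N3 := @nbhs_lt _ _ _ (@cont_beta R (m%:~R * th)) h3.
  have [b [[Lb nDb] [h1 [h4 h5]]]] := cla _ (filterI N1 (filterI N2 N3)).
  by apply: nDb; split => //; split; [apply/andP; split|exact: ltW].
- case=> [[[zx zy] al] r] [La hH].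
  have [Da|nDa] := pselect (Dm (zx, zy, al, r)); last first.
    by split => //; apply: subset_closure.
  split => //.
  have [_ [hb hc]] := Da.
  rewrite /pr /palpha /pz /= in hb hc hH La *.
  set c := m%:~R * th in hb hc hH *.
  set bt := al + c in hb hc hH *.
  have hbt : `|bt| < pi/2 by rewrite ltr_norml.
  have e1 : r * cos bt = 1.
    case: hH => h; first by apply/le_anti; rewrite h hc.
    by exfalso; lra.
  pose sg : R := if 0 <= bt then 1 else -1.
  pose f := fun s : R => (((zx, zy), al + sg * s, r)) : pt R.
  move=> N hN.
  have hN0 : nbhs (0:R) (f @^-1` N).
    by apply: (@path3_cont R (zx, zy) al sg r 0); rewrite /f mulr0 addr0.
  move/nbhs_ballP: hN0 => [e /= e0 he].
  pose s := Num.min (e / 2) (pi / 4).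
  have s0 : 0 < s by rewrite /s lt_min; apply/andP; split; lra.
  have se : s < e by rewrite /s gt_min; apply/orP; left; lra.
  have spi : s <= pi / 4 by rewrite /s ge_min lexx orbT.
  have Nf : N (f s).
    apply: he; rewrite -ball_normE /= sub0r normrN gtr0_norm //.
  exists (f s); split => //; split.
    by move: La; rewrite /Ltil /f /pr /pz /=.
  case=> _ [_ hc']; move: hc'; rewrite /f /pr /palpha /= -/c.
  have -> : al + sg * s + c = bt + sg * s by rewrite /bt; ring.
  have hns : `|bt + sg * s| = `|bt| + s.
    rewrite /sg; case: ifP => hb0.
      rewrite mul1r (ger0_norm hb0) ger0_norm //; lra.
    have hb1 : bt < 0 by rewrite ltNge hb0.
    rewrite mulN1r (ltr0_norm hb1) ltr0_norm; [ring|lra].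
  have hlt : cos (bt + sg * s) < cos bt.
    apply: cos_lt_abs; rewrite hns; first lra.
    have := normr_ge0 bt; lra.
  have r0 : 0 < r by case: La.
  have := ltr_pM2l r0 (cos (bt + sg * s)) (cos bt); rewrite hlt e1 => h.
  lra.
Qed.

End Main.

Theorem mainTheorem1 (R : realType) (k p : nat) :
  (0 < k)%N -> (k < p)%N ->
  let th : R := pi * k%:R / p%:R in
  Qu th = [set a | Ltil a /\ Xu th (palpha a, pr a)] /\
  (forall a : pt R, Qu th a -> pr a <= 1 / cos (th / 2)).
Proof.
move=> k0 kp th.
have QuE : forall a, Qu th a <-> forall m : int, HS R th m a.
  by move=> a; split => h m; [rewrite -Hg_eq; exact: h m| rewrite /Qu Hg_eq].
split.
  apply/seteqP; split.
  - move=> a /QuE h; have [La _] := h 0; split => // m.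
    have [_ hm] := h m.
    exists (palpha a + m%:~R * th, pr a); last by rewrite /tau_pow /= addrK.
    by split => //=; case: La.
  - move=> a [La hX]; apply/QuE => m; split => //.
    have [[y1 y2] [_ hy] ht] := hX m.
    move: ht; rewrite /tau_pow /= => -[e1 e2].
    by rewrite -e1 -e2 subrK.
move=> a /QuE h.
have pi0 := pi_gt0 R.
have p0 : (0 < p)%N by apply: leq_trans kp.
have kp' : (k%:R : R) < p%:R by rewrite ltr_nat.
have k0' : (0 : R) < k%:R by rewrite ltr0n.
have p0' : (0 : R) < p%:R by rewrite ltr0n.
have th0 : 0 < th by rewrite /th divr_gt0 // mulr_gt0.
have thpi : th < pi.
  rewrite /th ltr_pdivrMr // ltr_pM2l //.
set n := Num.floor (palpha a / th + 1/2).
have /andP[hn1 hn2] : n%:~R <= palpha a / th + 1/2 < (n + 1)%:~R by exact: floor_itv.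
rewrite intrD in hn2.
set x := palpha a / th in hn1 hn2.
have hx : palpha a = x * th by rewrite /x divfK // gt_eqF.
have [La hm] := h (- n).
rewrite mulrNz hx in hm.
set bt := x * th + - n%:~R * th in hm.
have hb1 : - (th / 2) <= bt by rewrite /bt; nra.
have hb2 : bt <= th / 2 by rewrite /bt; nra.
have hbt : `|bt| <= th / 2 by rewrite ler_norml hb1 hb2.
have cpos : 0 < cos (th / 2) by apply: cos_gt0_pihalf; apply/andP; split; lra.
have hcos : cos (th / 2) <= cos bt.
  apply: cos_le_abs; rewrite (ger0_norm (ltW (divr_gt0 th0 _))) //; lra.
have r0 : 0 < pr a by case: La.
case: hm => hm; last by exfalso; lra.
rewrite ler_pdivlMr //.
apply: le_trans hm.
by rewrite ler_wpM2l // ltW.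
Qed.
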